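(* Let $\mathcal{E}$ be a finite labeled prime event structure. Then $\mathcal{L}(\mathcal{E})=\mathcal{L}(\mathcal{A}^{\mathcal{E}})$.
   Context: A finite $\mathcal{X}$-labeled prime event structure is $\mathcal{E}=\langle E,<,\#,h\rangle$ with finite $E$, strict partial order $<$, labeling $h:E\to\mathcal{X}$, and symmetric irreflexive conflict relation $\#$ closed under $<$ (if $e\#e'$ and $e'<e''$ then $e\#e''$); $\mathcal{X}$ contains $\varepsilon$ denoting the empty word; there is an event $\bot$ below all other events with $h(\bot)=\varepsilon$. A configuration is a left-closed, conflict-free subset of $E$; maximal if no configuration strictly contains it. A trace of a configuration lists each of its events exactly once respecting $<$; $\mathcal{L}(\mathcal{E})$ is the set of words $h(t)$ (pointwise, $\varepsilon$ omitted) for traces $t$ of maximal configurations. The automaton encoding is the NFA $\mathcal{A}^{\mathcal{E}}=\langle Q^{\mathcal{E}},\mathcal{X},\delta^{\mathcal{E}},q_0,F\rangle$ with $Q^{\mathcal{E}}=\{q_C\mid C$ a configuration of $\mathcal{E}\}$, $(q_{C_1},\sigma,q_{C_2})\in\delta^{\mathcal{E}}$ iff there is $e\in E$ with $C_1\cup\{e\}=C_2$ and $h(e)=\sigma$ (transitions labeled $\varepsilon$ are $\varepsilon$-moves), $q_0=q_{\{\bot\}}$, and $F=\{q_C\mid C$ maximal$\}$; $\mathcal{L}(\mathcal{A}^{\mathcal{E}})$ is its accepted language. *)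

(* Defs.v *)
From mathcomp Require Import all_boot.
Set Implicit Arguments. Unset Strict Implicit. Unset Printing Implicit Defensive.

(* Words: seq X; the distinguished letter [eps] denotes the empty word and is
   erased when reading off a word. *)
Definition erase (X : eqType) (eps : X) (s : seq X) : seq X :=
  [seq x <- s | x != eps].

Section PES.
Variables (X : eqType) (eps : X) (E : finType).
Variables (lt cf : rel E) (h : E -> X) (bot : E).

Definition is_pes : Prop :=
  [/\ irreflexive lt & transitive lt] /\
  [/\ symmetric cf, irreflexive cf
    & (forall e e' e'', cf e e' -> lt e' e'' -> cf e e'')] /\
  (forall e, e != bot -> lt bot e) /\ h bot = eps.

Definition is_config (C : {set E}) : Prop :=
  (forall e e', e \in C -> lt e' e -> e' \in C) /\
  (forall e e', e \in C -> e' \in C -> ~~ cf e e').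

Definition is_max_config (C : {set E}) : Prop :=
  is_config C /\ ~ (exists C', is_config C' /\ C \proper C').

Definition is_trace (C : {set E}) (t : seq E) : Prop :=
  [/\ uniq t, (forall e, (e \in t) = (e \in C))
    & (forall e e', e \in t -> e' \in t -> lt e e' -> index e t < index e' t)].

Definition pes_lang (w : seq X) : Prop :=
  exists C t, is_max_config C /\ is_trace C t /\ erase eps (map h t) = w.
End PES.

Record nfa (X : Type) := Nfa {
  nfa_state : Type;
  nfa_delta : nfa_state -> X -> nfa_state -> Prop;
  nfa_init : nfa_state;
  nfa_final : nfa_state -> Prop }.

Arguments nfa_delta {X} n _ _ _.
Arguments nfa_init {X} n.
Arguments nfa_final {X} n _.
Inductive nfa_run (X : Type) (A : nfa X) : nfa_state A -> seq X -> nfa_state A -> Prop :=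
| run_nil q : @nfa_run X A q [::] q
| run_cons q s q' l q'' :
    nfa_delta A q s q' -> @nfa_run X A q' l q'' -> @nfa_run X A q (s :: l) q''.

Definition nfa_lang (X : eqType) (eps : X) (A : nfa X) (w : seq X) : Prop :=
  exists l q, @nfa_run X A (nfa_init A) l q /\ nfa_final A q /\ erase eps l = w.

(* States: subsets of E; only configurations take part in transitions, so the
   effective state space is { q_C | C configuration }. *)
Definition pes_nfa (X : eqType) (E : finType) (lt cf : rel E) (h : E -> X)
    (bot : E) : nfa X :=
  @Nfa X {set E}
    (fun C1 s C2 => is_config lt cf C1 /\ is_config lt cf C2 /\
        exists e, e \notin C1 /\ C1 :|: [set e] = C2 /\ h e = s)
    [set bot]
    (fun C => is_max_config lt cf C).

(* Main.v *)
Require Import Defs.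
From mathcomp Require Import all_boot.

Lemma run_fwd (X : eqType) (E : finType) (lt cf : rel E) (h : E -> X) (bot : E)
  (t : seq E) : forall D : {set E},
  uniq t -> (forall x, x \in t -> x \notin D) ->
  (forall k, is_config lt cf (D :|: [set x in take k t])) ->
  @nfa_run X (pes_nfa lt cf h bot) D (map h t) (D :|: [set x in t]).
Proof.
elim: t => [|x t IH] D Hu Hd Hc /=.
  have -> : D :|: [set x in [::]] = D by apply/setP => y; rewrite !inE orbF.
  by constructor.
move: Hu => /andP [Hx Hu].
apply: (@run_cons _ (pes_nfa lt cf h bot) D (h x) (D :|: [set x])).
  split; first by have := Hc 0; rewrite take0;
    have -> : D :|: [set x0 in [::]] = D by apply/setP => y; rewrite !inE orbF.
  split; first by have := Hc 1; rewrite take_cons take0;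
    have -> : [set x0 in [:: x]] = [set x] by apply/setP => y; rewrite !inE.
  exists x; split => //; apply: Hd; by rewrite inE eqxx.
have -> : D :|: [set x0 in x :: t] = (D :|: [set x]) :|: [set x0 in t].
  by apply/setP => y; rewrite !inE orbA.
apply: IH => //.
  move=> y yt; rewrite !inE negb_or Hd ?inE ?yt ?orbT //=.
  by apply/eqP => e; move: Hx; rewrite -e yt.
move=> k; have := Hc k.+1; rewrite take_cons.
have -> : D :|: [set x0 in x :: take k t] = (D :|: [set x]) :|: [set x0 in take k t].
  by apply/setP => y; rewrite !inE orbA.
done.
Qed.

Lemma trace_step (E : finType) (lt cf : rel E) (D : {set E}) (t : seq E) (e : E) :
  irreflexive lt -> is_config lt cf D ->
  is_trace lt D t -> e \notin D -> is_config lt cf (D :|: [set e]) ->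
  is_trace lt (D :|: [set e]) (rcons t e).
Proof.
move=> Hirr [HDl _] [Hu Hm Ho] He [HCl _].
have et : e \notin t by rewrite Hm.
split.
- by rewrite rcons_uniq et Hu.
- by move=> x; rewrite mem_rcons !inE Hm orbC.
move=> x y; rewrite !mem_rcons !inE => Hx Hy Hl.
case/orP: Hy => [/eqP ye | yt].
  subst y.
  have xe : x != e by apply/eqP => xe; subst x; rewrite Hirr in Hl.
  rewrite (negbTE xe) /= in Hx.
  rewrite -!cats1 !index_cat Hx (negbTE et) /= eqxx addn0.
  by rewrite index_mem.
have xe : x != e.
  apply/eqP => xe; subst x; move: He; rewrite (HDl y) //; by rewrite -Hm.
rewrite (negbTE xe) /= in Hx.
rewrite -!cats1 !index_cat Hx yt; exact: Ho.
Qed.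

Lemma run_bwd (X : eqType) (E : finType) (lt cf : rel E) (h : E -> X) (bot : E)
  (D : {set E}) l (D' : {set E}) : @nfa_run X (pes_nfa lt cf h bot) D l D' -> irreflexive lt ->
  forall t, is_trace lt D t ->
  exists t', is_trace lt D' (t ++ t') /\ l = map h t'.
Proof.
elim => [q | q s q' l0 q'' Hd Hr IH] Hirr t Ht.
  by exists [::]; rewrite cats0.
case: Hd => [Hq [Hq' [e [He [Hqe Hs]]]]].
subst q'.
have := IH Hirr (rcons t e) (@trace_step _ lt cf q t e Hirr Hq Ht He Hq').
case => t' [Ht' Hl]; exists (e :: t'); split.
  by rewrite -cat_rcons.
by rewrite /= Hl Hs.
Qed.

Theorem lemma5 (X : eqType) (eps : X) (E : finType) (lt cf : rel E)
    (h : E -> X) (bot : E) :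
  is_pes eps lt cf h bot ->
  forall w : seq X,
    pes_lang eps lt cf h w <-> nfa_lang eps (pes_nfa lt cf h bot) w.
Proof.
move=> [[Hirr Htr] [[Hsym Hcirr Hinh] [Hbot Hheps]]] w.
have nltbot : forall x, ~~ lt x bot.
  move=> x; apply/negP => Hx.
  case: (eqVneq x bot) => [xb | xb]; first by subst x; rewrite Hirr in Hx.
  by move: (Htr _ _ _ (Hbot _ xb) Hx); rewrite Hirr.
have cbot : is_config lt cf [set bot].
  split.
    by move=> e e'; rewrite inE => /eqP -> Hl; move: (nltbot e'); rewrite Hl.
  by move=> e e'; rewrite !inE => /eqP -> /eqP ->; rewrite Hcirr.
split.
- case=> C [t [[HC Hmax] [[Hu Hm Ho] Hw]]].
  have bC : bot \in C.
    apply/negPn/negP => nb; apply: Hmax; exists [set bot]; split => //.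
    have C0 : C = set0.
      apply/setP => x; rewrite inE; apply/negP => xC; apply: (negP nb).
      case: (eqVneq x bot) => [<- // | xb].
      exact: (HC.1 x bot xC (Hbot _ xb)).
    rewrite C0; apply/properP; split; first by apply/subsetP => x; rewrite in_set0.
    by exists bot; rewrite !inE.
  have bt : bot \in t by rewrite Hm.
  case: t Hu Hm Ho Hw bt => [//|x t'] Hu Hm Ho Hw bt.
  have xb : x = bot.
    apply/eqP; apply/negPn/negP => xb.
    have := Ho bot x bt (mem_head _ _) (Hbot _ xb).
    by rewrite /= eqxx (negbTE xb).
  subst x.
  move: Hu => /= /andP [bt' Hu'].
  exists (map h t'), C; split; last split.
  + have -> : C = [set bot] :|: [set x in t'].
      by apply/setP => y; rewrite !inE -Hm inE.
    apply: run_fwd => //.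
      by move=> y yt; rewrite inE; apply/eqP => yb; move: bt'; rewrite -yb yt.
    move=> k; split.
      move=> e e'; rewrite !inE => He Hl.
      have eC : e \in C.
        rewrite -Hm inE; case/orP: He => [->//|]; by move/mem_take => ->; rewrite orbT.
      have e'C : e' \in C by exact: (HC.1 e e' eC Hl).
      move: e'C; rewrite -Hm inE; case/orP => [-> // | e't].
      case/orP: He => [/eqP eb | et].
        by subst e; move: (nltbot e'); rewrite Hl.
      have := Ho e' e; rewrite !inE e't (mem_take et) !orbT => /(_ isT isT Hl) /=.
      have e'b : (bot == e') = false.
        by apply/negbTE/eqP => eb; move: bt'; rewrite eb e't.
      have eb : (bot == e) = false.
        by apply/negbTE/eqP => eb; move: bt'; rewrite eb (mem_take et).
      rewrite e'b eb ltnS => Hi.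
      have et2 := mem_take et; rewrite (in_take _ e't); rewrite (in_take _ et2) in et.
      by rewrite (ltn_trans Hi et) orbT.
    move=> e e'; rewrite !inE => He He'; apply: HC.2; rewrite -Hm inE.
      by case/orP: He => [->|/mem_take ->]; rewrite ?orbT.
    by case/orP: He' => [->|/mem_take ->]; rewrite ?orbT.
  + by split.
  + by move: Hw; rewrite /= Hheps /erase /= eqxx.
- case=> l [q [Hr [Hf Hl]]].
  have Ht0 : is_trace lt [set bot] [:: bot].
    split => //; first by move=> e; rewrite !inE.
    by move=> e e'; rewrite !inE => /eqP -> /eqP ->; rewrite Hirr.
  case: (@run_bwd X E lt cf h bot [set bot] l q Hr Hirr _ Ht0) => t' [Ht' El].
  exists q, (bot :: t'); split => //; split => //.
  by rewrite -Hl El /= Hheps /erase /= eqxx.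
Qed.
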